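(* For each integer $k\ge4$, the function $\Phi_k$ has a unique zero in the interval $(\pi/k,\pi/(k-1))$.
   Context: For $\eta\in(0,\pi/3)$ let $|a|=\frac{1}{2\cos\eta}$ and, for an integer $k\ge1$, $\Phi_k(\eta)=(1-|a|^4)\sin((k-1)\eta)-|a|^3\sin((k-2)\eta)+|a|^k\sin\eta$. *)

(* Defs.v *)
From Stdlib Require Import Reals.
Open Scope R_scope.

Definition absa (eta : R) : R := 1 / (2 * cos eta).

Definition Phi (k : nat) (eta : R) : R :=
  (1 - absa eta ^ 4) * sin ((INR k - 1) * eta)
  - absa eta ^ 3 * sin ((INR k - 2) * eta)
  + absa eta ^ k * sin eta.

(* Main.v *)
Require Import Defs.
From Stdlib Require Import Reals Lra Lia.
From Coquelicot Require Import Coquelicot.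

Open Scope R_scope.
Definition D (k : nat) (x : R) : R :=
  let A := absa x in let s := sin x in let c := cos x in
  -4 * A^3 * (2 * s * A^2) * sin ((INR k - 1) * x)
  + (1 - A^4) * (INR k - 1) * cos ((INR k - 1) * x)
  - 3 * A^2 * (2 * s * A^2) * sin ((INR k - 2) * x)
  - A^3 * (INR k - 2) * cos ((INR k - 2) * x)
  + INR k * A^(pred k) * (2 * s * A^2) * s + A^k * c.

Lemma c2_ge x : 0 <= x <= PI/4 -> 1/2 <= cos x ^ 2.
Proof.
intros H. assert (0 <= cos (2*x)) by (apply cos_ge_0; lra).
rewrite cos_2a_cos in H0. simpl. lra.
Qed.

Lemma cos_lb1 y : 0 <= y <= 4/5 -> 1 - y*y/2 <= cos y.
Proof.
intros H. pose proof PI2_1 as HP.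
destruct (cos_bound y 0) as [H1 _]; try lra.
unfold cos_approx in H1. simpl in H1. unfold cos_term in H1. simpl in H1. lra.
Qed.

Lemma pow_le1 A n : 0 <= A <= 1 -> 0 <= A ^ n <= 1.
Proof.
intros HA. induction n; simpl; [lra|]. split; [nra|nra].
Qed.

Lemma pow_le_small A n m : 0 <= A <= 1 -> (m <= n)%nat -> A ^ n <= A ^ m.
Proof.
intros HA Hmn. replace n with (m + (n - m))%nat by lia. rewrite pow_add.
pose proof (pow_le1 A m HA). pose proof (pow_le1 A (n - m) HA). nra.
Qed.

Lemma D_neg k x : (5 <= k)%nat -> PI / INR k < x < PI / (INR k - 1) -> D k x < 0.
Proof.
intros Hk Hx.
set (K := INR k).
assert (HK : 5 <= K) by (unfold K; replace 5 with (INR 5) by (simpl; lra); apply le_INR; lia).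
fold K in Hx.
pose proof PI2_3_2 as HP3. pose proof PI_4 as HP4.
assert (HKx : PI < K * x).
{ assert (PI = K * (PI / K)) by (field; lra). nra. }
assert (HKx2 : (K - 1) * x < PI).
{ assert (PI = (K-1) * (PI / (K-1))) by (field; lra). nra. }
assert (Hx0 : 0 < x) by nra.
assert (Hx4 : x <= PI / 4) by nra.
pose proof (c2_ge x ltac:(lra)) as Hc2.
assert (Hc : 0 < cos x) by (apply cos_gt_0; lra).
assert (Hs : 0 <= sin x) by (apply sin_ge_0; lra).
pose proof (sin2_cos2 x) as Hsc. unfold Rsqr in Hsc.
set (c := cos x) in *. set (s := sin x) in *.
unfold D. fold K. fold s c.
set (A := absa x).
assert (HA : A = / (2 * c)) by (unfold A, absa; fold c; field; lra).
assert (HA0 : 0 < A) by (rewrite HA; apply Rinv_0_lt_compat; lra).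
assert (HAc : A * (2 * c) = 1) by (rewrite HA; field; lra).
assert (HA2 : A^2 <= 1/2).
{ simpl in Hc2. assert (0 <= A*A) by nra.
  assert ((A*A) * (4 * (c*c)) = 1) by (replace ((A*A) * (4 * (c*c))) with ((A*(2*c))*(A*(2*c))) by ring; rewrite HAc; ring).
  simpl. nra. }
assert (HA1 : A <= 7072/10000) by nra.
assert (HA4 : A^4 <= 1/4) by (replace (A^4) with (A^2 * A^2) by ring; nra).
assert (HA3 : A^3 <= 3536/10000) by (replace (A^3) with (A^2 * A) by ring; nra).
assert (HAp : A ^ pred k <= 1/4).
{ pose proof (pow_le_small A (pred k) 4 ltac:(lra) ltac:(lia)). lra. }
assert (HAk : A ^ k <= 1768/10000).
{ pose proof (pow_le_small A k 5 ltac:(lra) ltac:(lia)).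
  replace (A^5) with (A^4 * A) in H by ring. nra. }
assert (HAp0 : 0 <= A ^ pred k) by (apply pow_le; lra).
assert (HAk0 : 0 <= A ^ k) by (apply pow_le; lra).
assert (Hs1 : 0 <= sin ((K - 1) * x)) by (apply sin_ge_0; nra).
assert (Hs2 : 0 <= sin ((K - 2) * x)) by (apply sin_ge_0; nra).
assert (Hc2' : -1 <= cos ((K - 2) * x)) by apply COS_bound.
assert (Hc1 : cos ((K - 1) * x) <= -68/100).
{ replace ((K - 1) * x) with (PI - (PI - (K-1)*x)) by ring.
  rewrite Rtrigo_facts.cos_pi_minus.
  assert (Hy : 0 <= PI - (K-1) * x <= 4/5).
  { split; [lra|]. assert (PI/K <= PI/5). { apply Rmult_le_compat_l; [lra|].
      apply Rinv_le_contravar; lra. } nra. }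
  pose proof (cos_lb1 _ Hy). nra. }
assert (T1 : 0 <= 4 * A^3 * (2 * s * A^2) * sin ((K - 1) * x)).
{ assert (0 <= A^3) by (apply pow_le; lra). assert (0 <= A^2) by (apply pow_le; lra).
  assert (0 <= 4 * A^3 * (2 * s * A^2)) by (apply Rmult_le_pos; [lra|]; nra). nra. }
assert (T3 : 0 <= 3 * A^2 * (2 * s * A^2) * sin ((K - 2) * x)).
{ assert (0 <= A^2) by (apply pow_le; lra).
  assert (0 <= 3 * A^2 * (2 * s * A^2)) by (apply Rmult_le_pos; [lra|]; nra). nra. }
assert (T2 : (1 - A^4) * (K - 1) * cos ((K - 1) * x) <= - (51/100) * (K - 1)).
{ assert (3/4 <= 1 - A^4) by lra.
  assert ((1 - A^4) * (K - 1) >= 3/4 * (K-1)) by nra. nra. }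
assert (T4 : - A^3 * (K - 2) * cos ((K - 2) * x) <= 3536/10000 * (K - 2)).
{ assert (0 <= A^3) by (apply pow_le; lra). 
  assert (cos ((K - 2) * x) <= 1) by apply COS_bound.
  assert (- A^3 * cos ((K - 2) * x) <= A^3) by nra. nra. }
assert (T5 : K * A^(pred k) * (2 * s * A^2) * s <= K / 8).
{ assert (s * s <= 1/2) by (simpl in Hc2; lra).
  assert (0 <= A^2) by (apply pow_le; lra).
  assert (A^(pred k) * A^2 <= 1/8) by nra.
  assert (0 <= A^(pred k) * A^2) by nra.
  assert (A^(pred k) * A^2 * (s*s) <= 1/16) by nra.
  replace (K * A^(pred k) * (2 * s * A^2) * s) with (2 * K * (A^(pred k) * A^2 * (s*s))) by ring.
  nra. }
assert (T6 : A^k * c <= 1768/10000).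
{ assert (c <= 1) by (unfold c; apply COS_bound). nra. }
lra.
Qed.

Lemma derivPhi k x : cos x <> 0 -> is_derive (Phi k) x (D k x).
Proof.
intros H. unfold Phi, D, absa. auto_derive.
- repeat split; intro; apply H; lra.
- unfold Rdiv. set (P1 := (1 * / (2 * cos x)) ^ Init.Nat.pred k).
  set (P2 := (1 * / (2 * cos x)) ^ k). field. exact H.
Qed.

Lemma Phi_cont k x : cos x <> 0 -> continuity_pt (Phi k) x.
Proof.
intros H. apply derivable_continuous_pt. exists (D k x).
apply is_derive_Reals. apply derivPhi; auto.
Qed.

Lemma Aprops x : 0 < x <= PI/4 ->
  0 < cos x /\ 0 < sin x /\ 0 < absa x /\ absa x * (2 * cos x) = 1 /\ absa x ^ 2 <= 1/2.
Proof.
intros Hx. pose proof PI2_3_2.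
pose proof (c2_ge x ltac:(lra)) as Hc2.
assert (Hc : 0 < cos x) by (apply cos_gt_0; lra).
assert (Hs : 0 < sin x) by (apply sin_gt_0; lra).
assert (HA0 : 0 < absa x) by (unfold absa; apply Rdiv_lt_0_compat; lra).
assert (HAc : absa x * (2 * cos x) = 1) by (unfold absa; field; lra).
repeat split; auto.
set (A := absa x) in *. set (c := cos x) in *.
simpl in Hc2. assert (0 <= A*A) by nra.
assert ((A*A) * (4 * (c*c)) = 1) by (replace ((A*A) * (4 * (c*c))) with ((A*(2*c))*(A*(2*c))) by ring; rewrite HAc; ring).
simpl. nra.
Qed.

Lemma case5 k : (5 <= k)%nat ->
  exists eta : R,
    (PI / INR k < eta < PI / (INR k - 1) /\ Phi k eta = 0) /\
    (forall eta' : R, PI / INR k < eta' < PI / (INR k - 1) -> Phi k eta' = 0 -> eta' = eta).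
Proof.
intros Hk.
set (K := INR k).
assert (HK : 5 <= K) by (unfold K; replace 5 with (INR 5) by (simpl; lra); apply le_INR; lia).
pose proof PI2_3_2 as HP3. pose proof PI_4 as HP4.
set (x0 := PI / K). set (x1 := PI / (K - 1)).
assert (Hx01 : x0 < x1).
{ unfold x0, x1. apply Rmult_lt_compat_l; [lra|]. apply Rinv_lt_contravar; nra. }
assert (Hx0 : 0 < x0) by (unfold x0; apply Rdiv_lt_0_compat; lra).
assert (Hx1 : x1 <= PI/4).
{ unfold x1. apply Rmult_le_compat_l; [lra|]. apply Rinv_le_contravar; lra. }
assert (Hcos : forall t, x0 <= t <= x1 -> cos t <> 0).
{ intros t Ht. assert (0 < cos t) by (apply cos_gt_0; lra). lra. }
assert (Hf0 : 0 < Phi k x0).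
{ destruct (Aprops x0 ltac:(lra)) as (Hc & Hs & HA0 & HAc & HA2).
  unfold Phi. fold K.
  replace ((K - 1) * x0) with (PI - x0) by (unfold x0; field; lra).
  replace ((K - 2) * x0) with (PI - 2 * x0) by (unfold x0; field; lra).
  rewrite !sin_PI_x, sin_2a.
  set (A := absa x0) in *. set (s := sin x0) in *. set (c := cos x0) in *.
  assert (E : (1 - A ^ 4) * s - A ^ 3 * (2 * s * c) + A ^ k * s
             = s * (1 - A^4 - A^2 + A^k)).
  { replace (A ^ 3 * (2 * s * c)) with (A^2 * s * (A * (2 * c))) by ring. rewrite HAc. ring. }
  rewrite E. assert (0 <= A^k) by (apply pow_le; lra).
  assert (A^4 <= 1/4) by (replace (A^4) with (A^2*A^2) by ring; assert (0 <= A^2) by (apply pow_le; lra); nra).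
  apply Rmult_lt_0_compat; lra. }
assert (Hf1 : Phi k x1 < 0).
{ destruct (Aprops x1 ltac:(lra)) as (Hc & Hs & HA0 & HAc & HA2).
  unfold Phi. fold K.
  replace ((K - 1) * x1) with PI by (unfold x1; field; lra).
  replace ((K - 2) * x1) with (PI - x1) by (unfold x1; field; lra).
  rewrite sin_PI_x, sin_PI.
  set (A := absa x1) in *. set (s := sin x1) in *.
  assert (HA1 : A < 1) by (simpl in HA2; nra).
  replace k with (3 + (k - 3))%nat by lia. rewrite pow_add.
  pose proof (pow_le_small A (k-3) 1 ltac:(lra) ltac:(lia)).
  simpl (A ^ 1) in H. rewrite Rmult_1_r in H.
  assert (0 < A^3) by (apply pow_lt; lra).
  assert (0 < A^3 * s) by nra.
  assert (E : (1 - A ^ 4) * 0 - A ^ 3 * s + A ^ 3 * A ^ (k - 3) * s = A^3 * s * (A^(k-3) - 1)) by ring.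
  rewrite E. nra. }
destruct (Ranalysis5.IVT_interv (fun t => - Phi k t) x0 x1) as [z [Hz Hz0]].
- intros t Ht. apply (continuity_pt_opp (Phi k)). apply Phi_cont. auto.
- exact Hx01.
- lra.
- lra.
- assert (Hzz : Phi k z = 0) by lra.
  assert (x0 <> z) by (intro E; rewrite <- E in Hzz; lra).
  assert (Hz0' : x0 < z) by lra.
  assert (x1 <> z) by (intro E; rewrite <- E in Hzz; lra).
  assert (Hz1' : z < x1) by lra.
  exists z. split; [split; [split; assumption | assumption] |].
  intros e He He0.
  assert (Hdec : forall u v, x0 < u < x1 -> x0 < v < x1 -> u < v -> Phi k u = 0 -> Phi k v = 0 -> False).
  { intros u v Hu Hv Huv Pu Pv.
    destruct (MVT_cor2 (Phi k) (D k) u v Huv) as [c [Ec Hc]].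
    - intros c Hc. apply is_derive_Reals. apply derivPhi. apply Hcos. lra.
    - assert (D k c < 0) by (apply D_neg; auto; fold K; fold x0 x1; lra).
      rewrite Pu, Pv in Ec. nra. }
  destruct (Rtotal_order e z) as [Ho|[Ho|Ho]].
  + exfalso. apply (Hdec e z); auto.
  + exact Ho.
  + exfalso. apply (Hdec z e); auto.
Qed.

Lemma Phi4_id x : cos x <> 0 ->
  Phi 4 x * absa x ^ 2 = sin x * (1 - absa x ^ 2) * (1 - 2 * absa x ^ 4).
Proof.
intros Hc. unfold Phi.
replace (INR 4 - 1) with (2 + 1) by (simpl; ring).
replace (INR 4 - 2) with 2 by (simpl; ring).
replace ((2 + 1) * x) with (2 * x + x) by ring.
rewrite sin_plus, sin_2a, cos_2a_cos.
assert (HA : absa x * (2 * cos x) = 1) by (unfold absa; field; auto).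
set (A := absa x) in *. set (c := cos x) in *. set (s := sin x).
assert (Ec : c = / (2 * A)).
{ assert (A <> 0) by (intro E; rewrite E in HA; lra).
  apply (Rmult_eq_reg_l (2 * A)); [|lra]. rewrite Rinv_r by lra. lra. }
assert (A <> 0) by (intro E; rewrite E in HA; lra).
rewrite Ec. field. auto.
Qed.

Definition g (x : R) := 1 - 2 * absa x ^ 4.

Lemma g_cont x : cos x <> 0 -> continuity_pt g x.
Proof.
intros H. apply continuity_pt_filterlim. apply (ex_derive_continuous (V := R_NormedModule)).
unfold g, absa. auto_derive. repeat split; intro; apply H; lra.
Qed.

Lemma case4 :
  exists eta : R,
    (PI / INR 4 < eta < PI / (INR 4 - 1) /\ Phi 4 eta = 0) /\
    (forall eta' : R, PI / INR 4 < eta' < PI / (INR 4 - 1) -> Phi 4 eta' = 0 -> eta' = eta).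
Proof.
replace (INR 4) with 4 by (simpl; ring).
replace (4 - 1) with 3 by ring.
pose proof PI2_3_2 as HP3.
assert (Hcos : forall t, PI/4 <= t <= PI/3 -> 0 < cos t).
{ intros t Ht. apply cos_gt_0; lra. }
assert (Hg0 : g (PI/4) = 1/2).
{ unfold g. assert (cos (2 * (PI/4)) = 0) by (replace (2*(PI/4)) with (PI/2) by field; apply cos_PI2).
  rewrite cos_2a_cos in H. pose proof (Hcos (PI/4) ltac:(lra)).
  unfold absa. set (c := cos (PI/4)) in *.
  replace ((1 / (2 * c)) ^ 4) with (1 / (16 * (c*c) * (c*c))) by (field; lra).
  replace (c*c) with (1/2) by lra. field. }
assert (Hg1 : g (PI/3) = -1).
{ unfold g, absa. rewrite cos_PI3. field. }
destruct (Ranalysis5.IVT_interv (fun t => - g t) (PI/4) (PI/3)) as [z [Hz Hz0]].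
- intros t Ht. apply (continuity_pt_opp g). apply g_cont. pose proof (Hcos t Ht). lra.
- lra.
- lra.
- lra.
- assert (Hgz : g z = 0) by lra.
  assert (PI/4 <> z) by (intro E; rewrite <- E in Hgz; lra).
  assert (PI/3 <> z) by (intro E; rewrite <- E in Hgz; lra).
  assert (Hzi : PI/4 < z < PI/3) by lra.
  assert (Hphi : forall t, PI/4 < t < PI/3 -> (Phi 4 t = 0 <-> g t = 0)).
  { intros t Ht. pose proof (Hcos t ltac:(lra)) as Hc.
    pose proof (Phi4_id t ltac:(lra)) as Id. fold (g t) in Id.
    assert (Hs : 0 < sin t) by (apply sin_gt_0; lra).
    assert (Hc3 : cos (PI/3) < cos t) by (apply cos_decreasing_1; lra).
    rewrite cos_PI3 in Hc3.
    assert (HA : absa t * (2 * cos t) = 1) by (unfold absa; field; lra).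
    assert (HA0 : 0 < absa t) by (unfold absa; apply Rdiv_lt_0_compat; lra).
    set (A := absa t) in *.
    assert (A < 1) by nra.
    assert (0 < A^2) by (apply pow_lt; lra).
    assert (A^2 < 1) by (simpl; nra).
    split; intro E.
    - rewrite E in Id. assert (sin t * (1 - A^2) <> 0) by (apply Rmult_integral_contrapositive; split; lra).
      rewrite Rmult_0_l in Id. symmetry in Id.
      apply Rmult_integral in Id. destruct Id as [Id|Id]; [lra | exact Id].
    - rewrite E, Rmult_0_r in Id. apply Rmult_integral in Id. destruct Id; lra. }
  exists z. split; [split; [exact Hzi | apply Hphi; auto] |].
  intros e He He0. apply Hphi in He0; auto.
  unfold g in Hgz, He0.
  pose proof (Hcos e ltac:(lra)) as Hce. pose proof (Hcos z ltac:(lra)) as Hcz.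
  assert (HAe : absa e * (2 * cos e) = 1) by (unfold absa; field; lra).
  assert (HAz : absa z * (2 * cos z) = 1) by (unfold absa; field; lra).
  assert (HAe0 : 0 < absa e) by (unfold absa; apply Rdiv_lt_0_compat; lra).
  assert (HAz0 : 0 < absa z) by (unfold absa; apply Rdiv_lt_0_compat; lra).
  set (a1 := absa e) in *. set (a2 := absa z) in *.
  assert (E4 : (a1^2 - a2^2) * (a1^2 + a2^2) = 0) by (simpl; simpl in Hgz, He0; nra).
  apply Rmult_integral in E4. destruct E4 as [E4|E4]; [| assert (0 < a1^2) by (apply pow_lt; lra); assert (0 < a2^2) by (apply pow_lt; lra); lra].
  assert (E2 : (a1 - a2) * (a1 + a2) = 0) by (simpl in E4; nra).
  apply Rmult_integral in E2. destruct E2 as [E2|E2]; [| lra].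
  assert (a1 = a2) by lra.
  assert (cos e = cos z) by (rewrite H1 in HAe; nra).
  apply cos_inj; lra.
Qed.

Theorem lemma4p2 (k : nat) (hk : (4 <= k)%nat) :
  exists eta : R,
    (PI / INR k < eta < PI / (INR k - 1) /\ Phi k eta = 0) /\
    (forall eta' : R, PI / INR k < eta' < PI / (INR k - 1) -> Phi k eta' = 0 -> eta' = eta).
Proof.
destruct (Nat.eq_dec k 4) as [->|Hne].
- exact case4.
- apply case5. lia.
Qed.
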